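(* Let $q=p^n$ with $p>2$ prime, $g\ge2$ with $\gcd(g,p)=1$, and $a,\alpha\in\mathbb{F}_q$, $\alpha\neq0$, such that $X: y^2=x^{2g+1}+a x^{g+1}+\alpha^g x$ is a (nonsingular) hyperelliptic curve of genus $g$. Let $\omega:(x,y)\mapsto(x,-y)$ be the hyperelliptic involution. Fix $\beta\in\overline{\mathbb{F}}_q$ with $\beta^2=\alpha$ (for odd $g$ we take $\beta^{g+1}=\alpha^{(g+1)/2}$). Then $\sigma:(x,y)\mapsto\left(\frac{\alpha}{x},\, y\frac{\beta^{g+1}}{x^{g+1}}\right)$ is a non-hyperelliptic involution of $X$, and: 1. If $g$ is odd, $X/\langle\sigma\rangle$ is given by $y^2=D_g(x,\alpha)+a$ and $X/\langle\omega\sigma\rangle$ is given by $y^2=(x^2-4\alpha)(D_g(x,\alpha)+a)$ (over $\mathbb{F}_q$). 2. If $g$ is even, $X/\langle\sigma\rangle$ is given by $y^2=(x+2\beta)(D_g(x,\alpha)+a)$ and $X/\langle\omega\sigma\rangle$ is given by $y^2=(x-2\beta)(D_g(x,\alpha)+a)$ (over $\mathbb{F}_q(\beta)$).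
   Context: For $m\ge1$ and $\alpha$ in a field, the Dickson polynomial $D_m(x,\alpha)=\sum_{i=0}^{\lfloor m/2\rfloor}\frac{m}{m-i}\binom{m-i}{i}(-\alpha)^i x^{m-2i}$ is the unique polynomial satisfying $D_m\!\left(u+\frac{\alpha}{u},\alpha\right)=u^m+\left(\frac{\alpha}{u}\right)^m$. ''Is given by'' means birationally equivalent to the stated curve. *)

(* Defs.v *)
From HB Require Import structures.
From mathcomp Require Import all_boot all_order all_algebra all_field.
Set Implicit Arguments. Unset Strict Implicit. Unset Printing Implicit Defensive.
Import Order.TTheory GRing.Theory.
Local Open Scope ring_scope.

(* Dickson polynomial D_m(x, alpha) = sum_{i=0}^{m/2} m/(m-i) C(m-i,i) (-alpha)^i x^(m-2i);
   the coefficient m/(m-i) * C(m-i,i) is an integer, computed in nat by exact division. *)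
Definition dickson (K : fieldType) (m : nat) (al : K) : {poly K} :=
  \sum_(i < m./2.+1)
     ((((m * 'C(m - i, i)) %/ (m - i))%N)%:R * (- al) ^+ i) *: 'X^(m - 2 * i).

Definition hyp_poly (K : fieldType) (g : nat) (a al : K) : {poly K} :=
  'X^(2 * g + 1) + a *: 'X^(g + 1) + (al ^+ g) *: 'X.

Section FF.
Variables (K L : fieldType) (iota : {rmorphism K -> L}).

Definition fixesK (s : L -> L) := forall k : K, s (iota k) = iota k.

Definition transc (u : L) :=
  forall P : {poly K}, P != 0 -> (map_poly iota P).[u] != 0.

(* z lies in K(u, v) when v is quadratic over K(u): z = A(u) + B(u) v, A, B in K(u). *)
Definition in_gen (u v z : L) :=
  exists P1 P2 Q1 Q2 : {poly K},
    z = (map_poly iota P1).[u] / (map_poly iota P2).[u]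
        + (map_poly iota Q1).[u] / (map_poly iota Q2).[u] * v.

(* The subfield S of L (containing K) is the function field K(u,v) of the
   curve v^2 = h(u), with u transcendental: i.e. S is K-isomorphic to the
   function field of the curve y^2 = h(x) via x |-> u, y |-> v. *)
Definition is_func_field (h : {poly K}) (u v : L) (S : pred L) :=
  [/\ transc u, v ^+ 2 = (map_poly iota h).[u], S u, S v &
      forall z, S z -> in_gen u v z].
End FF.

(* Main.v *)
Require Import Defs.
From HB Require Import structures.
From mathcomp Require Import all_boot all_order all_algebra all_field.
From mathcomp Require Import zify ring.
Set Implicit Arguments. Unset Strict Implicit. Unset Printing Implicit Defensive.
Import GRing.Theory.
Local Open Scope ring_scope.

Definition ev (K L : fieldType) (iota : {rmorphism K -> L}) (z : L) (P : {poly K}) :=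
  (map_poly iota P).[z].

Section EvLemmas.
Lemma evD (K L : fieldType) (iota : {rmorphism K -> L}) z P Q :
  ev iota z (P + Q) = ev iota z P + ev iota z Q.
Proof. by rewrite /ev rmorphD hornerD. Qed.
Lemma evN (K L : fieldType) (iota : {rmorphism K -> L}) z P :
  ev iota z (- P) = - ev iota z P.
Proof. by rewrite /ev rmorphN hornerN. Qed.
Lemma evB (K L : fieldType) (iota : {rmorphism K -> L}) z P Q :
  ev iota z (P - Q) = ev iota z P - ev iota z Q.
Proof. by rewrite /ev rmorphB hornerD hornerN. Qed.
Lemma evM (K L : fieldType) (iota : {rmorphism K -> L}) z P Q :
  ev iota z (P * Q) = ev iota z P * ev iota z Q.
Proof. by rewrite /ev rmorphM hornerM. Qed.
Lemma evC (K L : fieldType) (iota : {rmorphism K -> L}) z c :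
  ev iota z c%:P = iota c.
Proof. by rewrite /ev map_polyC hornerC. Qed.
Lemma ev0 (K L : fieldType) (iota : {rmorphism K -> L}) z :
  ev iota z 0 = 0.
Proof. by rewrite /ev rmorph0 horner0. Qed.
Lemma ev1 (K L : fieldType) (iota : {rmorphism K -> L}) z :
  ev iota z 1 = 1.
Proof. by rewrite /ev rmorph1 hornerC. Qed.
Lemma evX (K L : fieldType) (iota : {rmorphism K -> L}) z :
  ev iota z 'X = z.
Proof. by rewrite /ev map_polyX hornerX. Qed.
Lemma evXn (K L : fieldType) (iota : {rmorphism K -> L}) z n :
  ev iota z 'X^n = z ^+ n.
Proof. by rewrite /ev map_polyXn hornerXn. Qed.
Lemma evZ (K L : fieldType) (iota : {rmorphism K -> L}) z c P :
  ev iota z (c *: P) = iota c * ev iota z P.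
Proof. by rewrite /ev map_polyZ hornerZ. Qed.
Lemma evX_exp (K L : fieldType) (iota : {rmorphism K -> L}) z P n :
  ev iota z (P ^+ n) = ev iota z P ^+ n.
Proof. by rewrite /ev rmorphXn horner_exp. Qed.
End EvLemmas.

Lemma transc_inj (K L : fieldType) (iota : {rmorphism K -> L}) z P Q :
  transc iota z -> ev iota z P = ev iota z Q -> P = Q.
Proof.
move=> tz e; apply/eqP; rewrite -subr_eq0; apply/negPn/negP => /tz.
by rewrite -/(ev iota z (P - Q)) evB e subrr eqxx.
Qed.

Lemma transc_ne0 (K L : fieldType) (iota : {rmorphism K -> L}) z P :
  transc iota z -> P != 0 -> ev iota z P != 0.
Proof. by move=> tz /tz. Qed.

Lemma ev_morph (K L : fieldType) (iota : {rmorphism K -> L}) (f : {rmorphism L -> L}) z P :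
  fixesK iota f -> f (ev iota z P) = ev iota (f z) P.
Proof.
move=> hf; rewrite /ev -horner_map -map_poly_comp; congr horner.
by apply: eq_map_poly => k /=; exact: hf.
Qed.

Lemma transc_ne0x (K L : fieldType) (iota : {rmorphism K -> L}) z :
  transc iota z -> z != 0.
Proof. by move=> tz; have := tz 'X (negbT (polyX_eq0 _)); rewrite -/(ev _ _ _) evX. Qed.

Definition ratv (K L : fieldType) (iota : {rmorphism K -> L}) z (P Q : {poly K}) :=
  ev iota z P / ev iota z Q.

Definition RF (K L : fieldType) (iota : {rmorphism K -> L}) z (w : L) :=
  exists P Q : {poly K}, w = ratv iota z P Q.

Lemma ratv_norm (K L : fieldType) (iota : {rmorphism K -> L}) (P Q : {poly K}) :
  exists P' Q', Q' != 0 /\ forall z, ratv iota z P Q = ratv iota z P' Q'.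
Proof.
have [->|nQ] := eqVneq Q 0.
  by exists 0, 1; split => [|z]; rewrite ?oner_neq0 // /ratv !ev0 ev1 invr0 !mulr0 mul0r.
by exists P, Q.
Qed.

Lemma transfer (K L : fieldType) (iota : {rmorphism K -> L}) z z' P1 P2 R1 R2 :
  transc iota z -> transc iota z' ->
  ratv iota z P1 P2 = ratv iota z R1 R2 -> ratv iota z' P1 P2 = ratv iota z' R1 R2.
Proof.
move=> tz tz'.
have zero_case : forall A B C D, B = 0 -> ratv iota z A B = ratv iota z C D ->
    ratv iota z' A B = ratv iota z' C D.
  move=> A B C D -> e.
  have : ratv iota z C D = 0 by rewrite -e /ratv ev0 invr0 mulr0.
  rewrite /ratv ev0 invr0 mulr0 => /eqP; rewrite mulf_eq0 invr_eq0 => /orP[] /eqP h.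
    have -> : C = 0 by apply: (transc_inj tz); rewrite ev0.
    by rewrite ev0 mul0r.
  have -> : D = 0 by apply: (transc_inj tz); rewrite ev0.
  by rewrite ev0 invr0 mulr0.
have [h2|nP2] := eqVneq P2 0; first by apply: zero_case.
have [h4|nR2] := eqVneq R2 0.
  by move=> e; symmetry; apply: zero_case => //.
move=> /eqP; rewrite /ratv eqr_div ?transc_ne0 // -!evM => /eqP /(transc_inj tz) e.
apply/eqP; rewrite eqr_div ?transc_ne0 // -!evM e //.
Qed.

Lemma ratv_add (K L : fieldType) (iota : {rmorphism K -> L}) z P1 Q1 P2 Q2 :
  transc iota z -> Q1 != 0 -> Q2 != 0 ->
  ratv iota z P1 Q1 + ratv iota z P2 Q2 = ratv iota z (P1 * Q2 + P2 * Q1) (Q1 * Q2).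
Proof.
move=> tz n1 n2; have e1 := transc_ne0 tz n1; have e2 := transc_ne0 tz n2.
rewrite /ratv evD !evM; field; by rewrite e1 e2.
Qed.

Lemma ratv_mul (K L : fieldType) (iota : {rmorphism K -> L}) z P1 Q1 P2 Q2 :
  ratv iota z P1 Q1 * ratv iota z P2 Q2 = ratv iota z (P1 * P2) (Q1 * Q2).
Proof. by rewrite /ratv !evM invfM mulrACA. Qed.

Lemma ratv_opp (K L : fieldType) (iota : {rmorphism K -> L}) z P Q :
  - ratv iota z P Q = ratv iota z (- P) Q.
Proof. by rewrite /ratv evN mulNr. Qed.

Lemma ratv_inv (K L : fieldType) (iota : {rmorphism K -> L}) z P Q :
  (ratv iota z P Q)^-1 = ratv iota z Q P.
Proof. by rewrite /ratv invfM invrK mulrC. Qed.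

Lemma ratv_ev (K L : fieldType) (iota : {rmorphism K -> L}) z P :
  ev iota z P = ratv iota z P 1.
Proof. by rewrite /ratv ev1 invr1 mulr1. Qed.

Lemma RF_add (K L : fieldType) (iota : {rmorphism K -> L}) z a b :
  transc iota z -> RF iota z a -> RF iota z b -> RF iota z (a + b).
Proof.
move=> tz [P1 [Q1 ->]] [P2 [Q2 ->]].
have [P1' [Q1' [n1 e1]]] := ratv_norm iota P1 Q1.
have [P2' [Q2' [n2 e2]]] := ratv_norm iota P2 Q2.
rewrite e1 e2 ratv_add //; by do 2 eexists.
Qed.
Lemma RF_mul (K L : fieldType) (iota : {rmorphism K -> L}) z a b :
  RF iota z a -> RF iota z b -> RF iota z (a * b).
Proof. by move=> [P1 [Q1 ->]] [P2 [Q2 ->]]; rewrite ratv_mul; do 2 eexists. Qed.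
Lemma RF_opp (K L : fieldType) (iota : {rmorphism K -> L}) z a :
  RF iota z a -> RF iota z (- a).
Proof. by move=> [P1 [Q1 ->]]; rewrite ratv_opp; do 2 eexists. Qed.
Lemma RF_inv (K L : fieldType) (iota : {rmorphism K -> L}) z a :
  RF iota z a -> RF iota z (a^-1).
Proof. by move=> [P1 [Q1 ->]]; rewrite ratv_inv; do 2 eexists. Qed.
Lemma RF_ev (K L : fieldType) (iota : {rmorphism K -> L}) z P :
  RF iota z (ev iota z P).
Proof. by rewrite ratv_ev; do 2 eexists. Qed.
Lemma RF_sub (K L : fieldType) (iota : {rmorphism K -> L}) z a b :
  transc iota z -> RF iota z a -> RF iota z b -> RF iota z (a - b).
Proof. by move=> tz ha hb; apply: RF_add => //; apply: RF_opp. Qed.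
Lemma RF_div (K L : fieldType) (iota : {rmorphism K -> L}) z a b :
  RF iota z a -> RF iota z b -> RF iota z (a / b).
Proof. by move=> ha hb; apply: RF_mul => //; apply: RF_inv. Qed.

Lemma size_hyp (K : fieldType) (g : nat) (a al : K) :
  (1 <= g)%N -> size (hyp_poly g a al) = (2 * g + 2)%N.
Proof.
move=> hg; rewrite /hyp_poly -addrA size_polyDl size_polyXn ?addn1 //; first lia.
apply: (leq_ltn_trans (size_polyD _ _)); rewrite gtn_max.
apply/andP; split; apply: (leq_ltn_trans (size_scale_leq _ _)).
  rewrite size_polyXn; lia.
rewrite size_polyX; lia.
Qed.

Lemma uniq_rep (K L : fieldType) (iota : {rmorphism K -> L}) x y (h : {poly K}) a1 b1 a2 b2 :
  transc iota x -> y ^+ 2 = ev iota x h -> h != 0 -> ~~ odd (size h) ->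
  RF iota x a1 -> RF iota x b1 -> RF iota x a2 -> RF iota x b2 ->
  a1 + b1 * y = a2 + b2 * y -> a1 = a2 /\ b1 = b2.
Proof.
move=> tx hy nh eh ra1 rb1 ra2 rb2 e.
have [eb|nb] := eqVneq b1 b2; first by split=> //; move: e; rewrite eb => /addIr.
have ey : y = (a2 - a1) / (b1 - b2).
  have e' : (b1 - b2) * y = a2 - a1.
    by rewrite mulrBl -[b1 * y](addKr a1) e; ring.
  by rewrite -e' mulrC mulKf // subr_eq0.
have : RF iota x y.
  by rewrite ey; apply: RF_div; apply: RF_sub.
move=> [P0 [Q0 e0]]; have [P [Q [nQ eQ]]] := ratv_norm iota P0 Q0.
move: e0; rewrite eQ /ratv => e1.
have nq := transc_ne0 tx nQ.
have eP : ev iota x P = y * ev iota x Q by rewrite e1 divfK.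
have ePP : P * P = h * (Q * Q).
  apply: (transc_inj tx); rewrite !evM eP -hy; ring.
have nP : P != 0.
  apply/eqP=> P0'; move: ePP; rewrite P0' mul0r => /esym/eqP.
  by rewrite !mulf_eq0 (negbTE nh) (negbTE nQ).
have sPP := size_mul nP nP; have sQQ := size_mul nQ nQ.
have sh := size_mul nh (mulf_neq0 nQ nQ).
have e3 := congr1 (fun p : {poly K} => size p) ePP; simpl in e3.
have [k hk] : exists k, size h = (2 * k)%N.
  exists (size h)./2; rewrite -[LHS]odd_double_half (negbTE eh) add0n -muln2 mulnC //.
rewrite sPP sh sQQ hk -!subn1 in e3.
have hQ : (0 < size Q)%N by rewrite size_poly_gt0.
have hP : (0 < size P)%N by rewrite size_poly_gt0.
clear hk; move: e3 hP hQ; move: (size P) (size Q) k => sp sq kk; lia.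
Qed.

Definition quad (K : fieldType) := ({poly K} * {poly K} * {poly K} * {poly K})%type.

Definition repf (K L : fieldType) (iota : {rmorphism K -> L}) (z w : L) (t : quad K) :=
  ratv iota z t.1.1.1 t.1.1.2 + ratv iota z t.1.2 t.2 * w.

Lemma in_gen_ex (K L : fieldType) (iota : {rmorphism K -> L}) x y z :
  in_gen iota x y z -> exists t : quad K, z == repf iota x y t.
Proof. by move=> [P1 [P2 [Q1 [Q2 e]]]]; exists (P1, P2, Q1, Q2); rewrite e. Qed.

Definition sdef (K L : fieldType) (iota : {rmorphism K -> L}) (x y x' y' : L)
  (H : forall z, in_gen iota x y z) (z : L) : L :=
  repf iota x' y' (xchoose (in_gen_ex (H z))).

Definition goodq (K : fieldType) (t : quad K) := (t.1.1.2 != 0) && (t.2 != 0).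

Lemma rep_norm (K L : fieldType) (iota : {rmorphism K -> L}) (t : quad K) :
  exists t', goodq t' /\ forall z w, repf iota z w t = repf iota z w t'.
Proof.
case: t => [[[P1 P2] Q1] Q2].
have [P1' [P2' [n1 e1]]] := ratv_norm iota P1 P2.
have [Q1' [Q2' [n2 e2]]] := ratv_norm iota Q1 Q2.
exists (P1', P2', Q1', Q2'); split; first by rewrite /goodq n1 n2.
by move=> z w; rewrite /repf /= e1 e2.
Qed.

Definition qsub (K : fieldType) (t1 t2 : quad K) : quad K :=
  (t1.1.1.1 * t2.1.1.2 - t2.1.1.1 * t1.1.1.2, t1.1.1.2 * t2.1.1.2,
   t1.1.2 * t2.2 - t2.1.2 * t1.2, t1.2 * t2.2).

Definition qmul (K : fieldType) (h : {poly K}) (t1 t2 : quad K) : quad K :=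
  let: (P1, P2, Q1, Q2) := t1 in let: (R1, R2, S1, S2) := t2 in
  (P1 * R1 * (Q2 * S2) + Q1 * S1 * h * (P2 * R2), P2 * R2 * (Q2 * S2),
   P1 * S1 * (R2 * Q2) + R1 * Q1 * (P2 * S2), P2 * S2 * (R2 * Q2)).

Lemma repf_sub (K L : fieldType) (iota : {rmorphism K -> L}) z w t1 t2 :
  transc iota z -> goodq t1 -> goodq t2 ->
  repf iota z w t1 - repf iota z w t2 = repf iota z w (qsub t1 t2).
Proof.
case: t1 => [[[P1 P2] Q1] Q2]; case: t2 => [[[R1 R2] S1] S2].
move=> tz /andP[/= n1 n2] /andP[/= n3 n4].
have := transc_ne0 tz n1; have := transc_ne0 tz n2.
have := transc_ne0 tz n3; have := transc_ne0 tz n4.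
rewrite /repf /ratv /= !evB !evM => e4 e3 e2 e1; field.
by rewrite e1 e2 e3 e4.
Qed.

Lemma repf_mul (K L : fieldType) (iota : {rmorphism K -> L}) z w h t1 t2 :
  transc iota z -> w ^+ 2 = ev iota z h -> goodq t1 -> goodq t2 ->
  repf iota z w t1 * repf iota z w t2 = repf iota z w (qmul h t1 t2).
Proof.
case: t1 => [[[P1 P2] Q1] Q2]; case: t2 => [[[R1 R2] S1] S2].
move=> tz hw /andP[/= n1 n2] /andP[/= n3 n4].
have := transc_ne0 tz n1; have := transc_ne0 tz n2.
have := transc_ne0 tz n3; have := transc_ne0 tz n4.
rewrite /repf /ratv /= !evD !evM -hw => e4 e3 e2 e1; field.
by rewrite e1 e2 e3 e4.
Qed.

Lemma goodq_sub (K : fieldType) (t1 t2 : quad K) :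
  goodq t1 -> goodq t2 -> goodq (qsub t1 t2).
Proof.
by case/andP=> n1 n2 /andP[n3 n4]; rewrite /goodq /= !mulf_neq0.
Qed.

Lemma goodq_mul (K : fieldType) h (t1 t2 : quad K) :
  goodq t1 -> goodq t2 -> goodq (qmul h t1 t2).
Proof.
case: t1 => [[[P1 P2] Q1] Q2]; case: t2 => [[[R1 R2] S1] S2].
by case/andP=> /= n1 n2 /andP[/= n3 n4]; rewrite /goodq /= !mulf_neq0.
Qed.

Section Ext.
Lemma sdef_rep (K L : fieldType) (iota : {rmorphism K -> L}) (h : {poly K}) x y x' y'
  (H : forall z, in_gen iota x y z) :
  transc iota x -> y ^+ 2 = ev iota x h -> h != 0 -> ~~ odd (size h) ->
  transc iota x' ->
  forall z t, z = repf iota x y t -> @sdef K L iota x y x' y' H z = repf iota x' y' t.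
Proof.
move=> tx hy nh eh tx' z t ez.
rewrite /sdef; set t0 := xchoose _.
have /eqP e0 : z == repf iota x y t0 := xchooseP (in_gen_ex (H z)).
have := ez; rewrite e0 /repf => e.
have [ea eb] := uniq_rep tx hy nh eh (ltac:(do 2 eexists; reflexivity))
   (ltac:(do 2 eexists; reflexivity)) (ltac:(do 2 eexists; reflexivity))
   (ltac:(do 2 eexists; reflexivity)) e.
by rewrite (transfer tx tx' ea) (transfer tx tx' eb).
Qed.
End Ext.

Lemma repf_simpl (K L : fieldType) (iota : {rmorphism K -> L}) z w P :
  repf iota z w (P, 1, 0, 1) = ev iota z P.
Proof. by rewrite /repf /ratv /= ev1 ev0 invr1 !mulr1 mul0r addr0. Qed.

Lemma repf_y (K L : fieldType) (iota : {rmorphism K -> L}) z w :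
  repf iota z w (0, 1, 1, 1) = w.
Proof. by rewrite /repf /ratv /= ev1 ev0 invr1 !mulr1 mul1r add0r. Qed.

Lemma ext_exists (K L : fieldType) (iota : {rmorphism K -> L}) (h : {poly K}) x y x' y' :
  is_func_field iota h x y predT -> h != 0 -> ~~ odd (size h) ->
  transc iota x' -> y' ^+ 2 = ev iota x' h ->
  exists s : {rmorphism L -> L}, fixesK iota s /\ s x = x' /\ s y = y'.
Proof.
case=> tx hy _ _ hgen nh eh tx' hy'.
have H : forall z, in_gen iota x y z by move=> z; exact: hgen.
pose f := @sdef K L iota x y x' y' H.
have fr := @sdef_rep K L iota h x y x' y' H tx hy nh eh tx'.
have good : forall z, exists t, goodq t /\ z = repf iota x y t.
  move=> z; have /eqP ez := xchooseP (in_gen_ex (H z)).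
  have [t' [gt' et']] := rep_norm iota (xchoose (in_gen_ex (H z))).
  by exists t'; rewrite -et'.
have fB : {morph f : a b / a - b}.
  move=> a b; have [ta [ga ea]] := good a; have [tb [gb eb]] := good b.
  rewrite /f (fr _ _ ea) (fr _ _ eb) (fr (a - b) (qsub ta tb)).
    by rewrite repf_sub.
  by rewrite ea eb repf_sub.
have f1 : f 1 = 1.
  by rewrite /f (fr 1 (1, 1, 0, 1)) ?repf_simpl ?ev1.
have fM : {morph f : a b / a * b}.
  move=> a b; have [ta [ga ea]] := good a; have [tb [gb eb]] := good b.
  rewrite /f (fr _ _ ea) (fr _ _ eb) (fr (a * b) (qmul h ta tb)).
    by rewrite (repf_mul tx' hy').
  by rewrite ea eb (repf_mul tx hy).
pose sRM : {rmorphism L -> L} :=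
  HB.pack f (GRing.isZmodMorphism.Build _ _ f fB)
            (GRing.isMonoidMorphism.Build _ _ f (f1, fM)).
exists sRM; split; [|split].
- by move=> k; rewrite /= /f (fr _ (k%:P, 1, 0, 1)) ?repf_simpl ?evC.
- by rewrite /= /f (fr _ ('X, 1, 0, 1)) ?repf_simpl ?evX.
- by rewrite /= /f (fr _ (0, 1, 1, 1)) ?repf_y.
Qed.

Definition cD (m i : nat) := ((m * 'C(m - i, i)) %/ (m - i))%N.

Lemma cD_rec n i : cD n.+2 i.+1 = ('C(n.+1 - i, i.+1) + 'C(n - i, i))%N.
Proof.
rewrite /cD; case: (leqP i n) => hin.
  have [k ->] : exists k, n = (i + k)%N by exists (n - i)%N; lia.
  have -> : ((i + k).+2 - i.+1 = k.+1)%N by lia.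
  have -> : ((i + k).+1 - i = k.+1)%N by lia.
  have -> : ((i + k) - i = k)%N by lia.
  have e := mul_bin_diag k.+1 i; simpl in e.
  have -> : ((i + k).+2 * 'C(k.+1, i.+1) = k.+1 * ('C(k.+1, i.+1) + 'C(k, i)))%N.
    rewrite mulnDr e; lia.
  by rewrite mulKn.
have -> : (n.+2 - i.+1 = 0)%N by lia.
have -> : (n.+1 - i = 0)%N by lia.
have -> : (n - i = 0)%N by lia.
by rewrite !bin0n /=; case: i hin.
Qed.

Lemma cD_small m i : (m < i.*2)%N -> cD m i = 0%N.
Proof. by move=> h; rewrite /cD bin_small ?muln0 ?div0n //; lia. Qed.

Lemma cD0 m : (0 < m)%N -> cD m 0 = 1%N.
Proof. by move=> h; rewrite /cD subn0 bin0 muln1 divnn h. Qed.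

Section Dick.
Variable F : fieldType.

Definition Tm (al z : F) (m i : nat) : F :=
  ('C(m - i, i))%:R * (- al) ^+ i * z ^+ (m - 2 * i).

Definition Em (al z : F) (m : nat) : F := \sum_(0 <= i < m.+1) Tm al z m i.

Lemma Tm_zero al z m i : (m < i.*2)%N -> Tm al z m i = 0.
Proof. by move=> h; rewrite /Tm bin_small ?mul0r //; lia. Qed.

Lemma Tm_rec al z n i :
  Tm al z n.+2 i.+1 = z * Tm al z n.+1 i.+1 - al * Tm al z n i.
Proof.
rewrite /Tm; case: (leqP i n) => hin.
  have [k ek] : exists k, n = (i + k)%N by exists (n - i)%N; lia.
  have -> : (n.+2 - i.+1 = k.+1)%N by lia.
  have -> : (n.+1 - i.+1 = k)%N by lia.
  have -> : (n - i = k)%N by lia.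
  rewrite binS natrD.
  have -> : (n.+2 - 2 * i.+1 = n - 2 * i)%N by lia.
  case: (leqP (2 * i).+1 n) => h2.
    have -> : (n - 2 * i = (n.+1 - 2 * i.+1).+1)%N by lia.
    rewrite !exprS; ring.
  rewrite (bin_small (_ : k < i.+1)%N); last by lia.
  rewrite !exprS; ring.
rewrite (bin_small (_ : n.+2 - i.+1 < i.+1)%N); last by lia.
rewrite (bin_small (_ : n.+1 - i.+1 < i.+1)%N); last by lia.
rewrite (bin_small (_ : n - i < i)%N); last by lia.
by rewrite !mul0r !mulr0 subrr.
Qed.

Lemma Em_rec al z n : Em al z n.+2 = z * Em al z n.+1 - al * Em al z n.
Proof.
rewrite /Em big_nat_recl // [in X in z * X]big_nat_recl //.
rewrite (eq_bigr (fun i => z * Tm al z n.+1 i.+1 - al * Tm al z n i)); last first.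
  by move=> i _; rewrite Tm_rec.
rewrite big_split /= -mulr_sumr sumrN -mulr_sumr.
rewrite [\sum_(0 <= i < n.+2) Tm al z n.+1 i.+1]big_nat_recr //=.
rewrite [\sum_(0 <= i < n.+2) Tm al z n i]big_nat_recr //=.
rewrite (Tm_zero _ _ (_ : n < (n.+1).*2)%N); last by lia.
rewrite (Tm_zero _ _ (_ : n.+1 < (n.+2).*2)%N); last by lia.
rewrite !addr0 /Tm !muln0 !subn0 !bin0 !expr0 !mul1r exprS; ring.
Qed.

Lemma Em0 al z : Em al z 0 = 1.
Proof. by rewrite /Em big_nat1 /Tm bin0 !expr0 !mul1r. Qed.

Lemma Em1 al z : Em al z 1 = z.
Proof.
rewrite /Em big_nat_recr //= big_nat1 /Tm /= bin0n bin0 !expr0 !mul1r; simpl.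
by rewrite !mul0r addr0 muln0 subn0 expr1.
Qed.

Lemma dickson_hornerE (al z : F) m :
  (dickson m al).[z] = \sum_(0 <= i < m.+1) (cD m i)%:R * (- al) ^+ i * z ^+ (m - 2 * i).
Proof.
rewrite /dickson horner_sum.
rewrite (eq_bigr (fun i : 'I_(m./2.+1) => (cD m i)%:R * (- al) ^+ i * z ^+ (m - 2 * i))); last first.
  by move=> i _; rewrite hornerZ hornerXn.
rewrite (big_ord_widen _ (fun i => (cD m i)%:R * (- al) ^+ i * z ^+ (m - 2 * i)) (_ : m./2.+1 <= m.+1)%N); last first.
  by rewrite ltnS leq_half_double; lia.
rewrite big_mkcond big_mkord; apply: eq_bigr => i _.
case: ifP => // /negbT; rewrite -leqNgt => hi.
by rewrite cD_small ?mul0r //; rewrite -ltn_half_double.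
Qed.

Lemma dickson_Em (al z : F) n :
  (dickson n.+2 al).[z] = Em al z n.+2 - al * Em al z n.
Proof.
rewrite dickson_hornerE /Em big_nat_recl // [in RHS]big_nat_recl //.
rewrite cD0 //.
rewrite (eq_bigr (fun i => Tm al z n.+2 i.+1 - al * Tm al z n i)); last first.
  move=> i _; rewrite cD_rec natrD /Tm.
  have -> : (n.+2 - 2 * i.+1 = n - 2 * i)%N by lia.
  have -> : (n.+2 - i.+1 = n.+1 - i)%N by lia.
  rewrite !exprS; ring.
rewrite sumrB -mulr_sumr.
rewrite [\sum_(0 <= i < n.+2) Tm al z n i]big_nat_recr //=.
rewrite (Tm_zero _ _ (_ : n < (n.+1).*2)%N); last by lia.
have -> : Tm al z n.+2 0 = z ^+ n.+2 by rewrite /Tm !subn0 bin0 expr0 !mul1r.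
rewrite ?muln0 ?subn0 expr0 !mul1r addr0; ring.
Qed.

Lemma dickson_val (t s : F) m : (0 < m)%N ->
  (dickson m (t * s)).[t + s] = t ^+ m + s ^+ m.
Proof.
case: m => // [] [|n] _.
  rewrite dickson_hornerE big_nat_recr //= big_nat1 cD0 //.
  by rewrite /cD /= bin0n muln0 div0n !expr0 !mulr1 mul0r addr0 mul1r expr1.
rewrite dickson_Em.
suff : forall n, (Em (t * s) (t + s) n.+2 - t * s * Em (t * s) (t + s) n = t ^+ n.+2 + s ^+ n.+2) /\
  (Em (t * s) (t + s) n.+3 - t * s * Em (t * s) (t + s) n.+1 = t ^+ n.+3 + s ^+ n.+3).
  by move=> /(_ n) [].
elim=> [|k [IH1 IH2]].
  rewrite !Em_rec Em1 Em0; split; ring.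
split=> //.
have -> : Em (t * s) (t + s) k.+4 - t * s * Em (t * s) (t + s) k.+2 =
  (t + s) * (Em (t * s) (t + s) k.+3 - t * s * Em (t * s) (t + s) k.+1)
  - t * s * (Em (t * s) (t + s) k.+2 - t * s * Em (t * s) (t + s) k).
  rewrite (Em_rec _ _ k.+2) (Em_rec _ _ k); ring.
rewrite IH1 IH2 !exprS; ring.
Qed.
End Dick.

Definition star (K : fieldType) (al : K) (d : nat) (P : {poly K}) : {poly K} :=
  \poly_(i < d.+1) (P`_(d - i) * al ^+ (d - i)).

Lemma ev_wide (K L : fieldType) (iota : {rmorphism K -> L}) z (P : {poly K}) n :
  (size P <= n)%N -> ev iota z P = \sum_(i < n) iota P`_i * z ^+ i.
Proof.
move=> hs; rewrite /ev (horner_coef_wide _ (_ : size (map_poly iota P) <= n)%N).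
  by apply: eq_bigr => i _; rewrite coef_map.
by rewrite size_map_poly.
Qed.

Lemma ev_star (K L : fieldType) (iota : {rmorphism K -> L}) (al : K) d (P : {poly K}) (z : L) :
  (size P <= d.+1)%N -> z != 0 ->
  ev iota z (star al d P) = z ^+ d * ev iota (iota al / z) P.
Proof.
move=> hs nz.
rewrite (ev_wide _ _ (_ : size (star al d P) <= d.+1)%N); last by apply: size_poly.
rewrite (ev_wide _ _ hs) mulr_sumr (reindex_inj rev_ord_inj) /=.
apply: eq_bigr => i _; rewrite coef_poly /= subSS.
have hi : (i <= d)%N by rewrite -ltnS.
rewrite ifT; last by lia.
rewrite subKn // rmorphM rmorphXn.
move: hi; move: (nat_of_ord i) => j hj.
have [k ->] : exists k, d = (k + j)%N by exists (d - j)%N; rewrite subnK.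
rewrite addnK exprD expr_div_n.
have : z ^+ j != 0 by rewrite expf_neq0.
move=> nzi; field; by rewrite nzi.
Qed.

Lemma star_neq0 (K : fieldType) (al : K) d (P : {poly K}) :
  al != 0 -> P != 0 -> (size P <= d.+1)%N -> star al d P != 0.
Proof.
move=> nal nP hs; apply/eqP => e; move: (congr1 (fun p : {poly K} => p`_(d - (size P).-1)) e) => /=.
rewrite coef_poly coef0 ifT; last by lia.
have -> : (d - (d - (size P).-1) = (size P).-1)%N by lia.
apply/eqP; rewrite mulf_neq0 ?expf_neq0 //.
by rewrite -lead_coefE lead_coef_eq0.
Qed.

Lemma transc_inv (K L : fieldType) (iota : {rmorphism K -> L}) (al : K) x :
  al != 0 -> transc iota x -> transc iota (iota al / x).
Proof.
move=> nal tx P nP.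
have nx := transc_ne0x tx.
have hs : (size P <= (size P).+1)%N by [].
have := transc_ne0 tx (star_neq0 nal nP hs).
rewrite (ev_star iota al hs nx) mulf_eq0 negb_or => /andP[_].
by [].
Qed.

Lemma ev_sum (K L : fieldType) (iota : {rmorphism K -> L}) z m (F : 'I_m -> {poly K}) :
  ev iota z (\sum_(i < m) F i) = \sum_(i < m) ev iota z (F i).
Proof. by rewrite /ev rmorph_sum horner_sum. Qed.

Lemma transc_u (K L : fieldType) (iota : {rmorphism K -> L}) (al : K) x :
  al != 0 -> transc iota x -> transc iota (x + iota al / x).
Proof.
move=> nal tx P nP; have nx := transc_ne0x tx.
set u := x + iota al / x.
have sP : size P = (size P).-1.+1 by rewrite prednK // size_poly_gt0.
set n := (size P).-1 in sP.
pose M i := ('X^2 + al%:P) ^+ i * 'X^(n - i) : {poly K}.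
pose W := \sum_(i < n.+1) P`_i *: M i.
have eW : ev iota x W = x ^+ n * ev iota u P.
  rewrite ev_sum (ev_wide _ _ (_ : size P <= n.+1)%N) ?sP // mulr_sumr; apply: eq_bigr => i _.
  rewrite evZ evM evX_exp evD evXn evC evXn.
  have hi : (i <= n)%N by rewrite -ltnS.
  move: hi; move: (nat_of_ord i) => j hj.
  have [k ->] : exists k, n = (k + j)%N by exists (n - j)%N; rewrite subnK.
  rewrite addnK /u exprD.
  have -> : x ^+ 2 + iota al = x * (x + iota al / x) by field.
  by rewrite exprMn; ring.
have nW : W != 0.
  apply/eqP => e; move: (congr1 (fun p : {poly K} => p`_(2 * n)) e) => /=.
  rewrite coef0 /W coef_sum big_ord_recr /= big1; last first.
    move=> i _; rewrite coefZ (nth_default _ (_ : size (M i) <= 2 * n)%N) ?mulr0 //.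
    apply: (leq_trans (size_polyMleq _ _)).
    apply: (@leq_trans (((size ('X^2 + al%:P : {poly K})).-1 * i).+1 + (n - i).+1).-1).
      rewrite -!subn1 leq_sub2r // leq_add ?size_polyXn // subn1; exact: size_poly_exp_leq.
    rewrite size_XnaddC //= ; have := ltn_ord i; lia.
  rewrite add0r coefZ /M subnn expr0 mulr1.
  have mo : ('X^2 + al%:P : {poly K}) ^+ n \is monic by rewrite monic_exp // monicXnaddC.
  have sz : (size (('X^2 + al%:P : {poly K}) ^+ n)).-1 = (2 * n)%N.
    by rewrite size_exp size_XnaddC.
  rewrite -sz -lead_coefE (monicP mo) mulr1 => /eqP.
  by rewrite /n -lead_coefE lead_coef_eq0 (negbTE nP).
have := transc_ne0 tx nW; rewrite eW mulf_eq0 negb_or => /andP[_].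
by [].
Qed.

Definition Dk (K : fieldType) (al : K) (k : nat) : {poly K} :=
  if k is 0 then (2%:R)%:P else dickson k al.

Lemma map_dickson (K L : fieldType) (iota : {rmorphism K -> L}) m (al : K) :
  map_poly iota (dickson m al) = dickson m (iota al).
Proof.
rewrite /dickson rmorph_sum; apply: eq_bigr => i _.
by rewrite /= map_polyZ map_polyXn rmorphM rmorph_nat rmorphXn rmorphN.
Qed.

Lemma ev_Dk (K L : fieldType) (iota : {rmorphism K -> L}) (al : K) x k :
  x != 0 -> ev iota (x + iota al / x) (Dk al k) = x ^+ k + (iota al / x) ^+ k.
Proof.
move=> nx; case: k => [|k].
  by rewrite /Dk evC rmorph_nat !expr0.
rewrite /Dk /ev map_dickson.
set s := iota al / x.
have -> : iota al = x * s by rewrite /s mulrC divfK.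
by rewrite dickson_val.
Qed.

Lemma palin (K L : fieldType) (iota : {rmorphism K -> L}) (al : K) x d (F : {poly K}) :
  al != 0 -> (2%:R : K) != 0 -> x != 0 -> (size F <= (2 * d).+1)%N ->
  iota al ^+ d * ev iota x F = x ^+ (2 * d) * ev iota (iota al / x) F ->
  exists G, ev iota x F = x ^+ d * ev iota (x + iota al / x) G.
Proof.
move=> nal n2 nx hs hF.
pose cc j := if (d <= j)%N then 1 else (al ^+ (d - j))^-1.
pose kk j := if (d <= j)%N then (j - d)%N else (d - j)%N.
exists (\sum_(j < (2 * d).+1) (F`_j * cc j / 2%:R) *: Dk al (kk j)).
have nal' : iota al != 0 by rewrite fmorph_eq0.
have n2' : (2%:R : L) != 0 by rewrite -(rmorph_nat iota) fmorph_eq0.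
set x' := iota al / x.
set c := x ^+ (2 * d) / iota al ^+ d.
have hF' : ev iota x F = c * ev iota x' F.
  rewrite /c mulrAC -hF; field; by rewrite expf_neq0.
have -> : ev iota x F = (ev iota x F + c * ev iota x' F) / 2%:R.
  rewrite -hF'; field; by rewrite n2'.
rewrite !(ev_wide _ _ hs) mulr_sumr -big_split mulr_suml ev_sum mulr_sumr.
apply: eq_bigr => j _ /=.
rewrite evZ ev_Dk // !rmorphM fmorphV rmorph_nat /cc /kk /x'.
move: (F`_j) => f; move: (nat_of_ord j) => jn.
case: leqP => hj.
  have [k ->] : exists k, jn = (d + k)%N by exists (jn - d)%N; rewrite subnKC.
  rewrite addKn rmorph1 /c mul2n -addnn !exprD !expr_div_n.
  have := expf_neq0 d nx; have := expf_neq0 k nx; have := expf_neq0 d nal'.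
  move=> h1 h2 h3; field; by rewrite h1 h2 h3 n2'.
have [k ek] : exists k, d = (jn + k)%N by exists (d - jn)%N; rewrite subnKC // ltnW.
rewrite /c ek addKn fmorphV rmorphXn mul2n -addnn !exprD !expr_div_n.
have := expf_neq0 jn nx; have := expf_neq0 k nx; have := expf_neq0 jn nal';
  have := expf_neq0 k nal'.
move=> h1 h2 h3 h4; field; by rewrite h1 h2 h3 h4 n2'.
Qed.

Lemma sym_rat (K L : fieldType) (iota : {rmorphism K -> L}) (al : K) x P Q :
  al != 0 -> (2%:R : K) != 0 -> transc iota x -> Q != 0 ->
  ratv iota (iota al / x) P Q = ratv iota x P Q ->
  exists G1 G2, ratv iota x P Q = ratv iota (x + iota al / x) G1 G2.
Proof.
move=> nal n2 tx nQ hsym.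
have nx := transc_ne0x tx.
have tx' := transc_inv nal tx.
have nal' : iota al != 0 by rewrite fmorph_eq0.
set x' := iota al / x in hsym tx' *.
have nx' : x' != 0 by rewrite mulf_neq0 ?invr_eq0.
have xx : iota al / x' = x by rewrite /x' invf_div mulrC divfK.
set d := (size P + size Q)%N.
have hP : (size P <= d.+1)%N by rewrite /d; lia.
have hQ : (size Q <= d.+1)%N by rewrite /d; lia.
have eQ := transc_ne0 tx nQ; have eQ' := transc_ne0 tx' nQ.
have cross : ev iota x' P = ev iota x P * ev iota x' Q / ev iota x Q.
  move: hsym; rewrite /ratv => /eqP; rewrite eqr_div // => /eqP e.
  by rewrite -e mulfK.
have sst : ev iota x' (star al d Q) = x' ^+ d * ev iota x Q.
  by rewrite ev_star // xx.
have sst2 : ev iota x (star al d Q) = x ^+ d * ev iota x' Q.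
  by rewrite ev_star.
have size_star : (size (star al d Q) <= d.+1)%N by apply: size_poly.
have sN : (size (P * star al d Q)%R <= (2 * d).+1)%N.
  apply: (leq_trans (size_polyMleq _ _)).
  have := size_star; rewrite /d; lia.
have sD : (size (Q * star al d Q)%R <= (2 * d).+1)%N.
  apply: (leq_trans (size_polyMleq _ _)).
  have := size_star; rewrite /d; lia.
have [GN eN] : exists G, ev iota x (P * star al d Q) = x ^+ d * ev iota (x + x') G.
  apply: palin => //.
  rewrite !evM sst sst2 cross /x' mul2n -addnn !exprD !expr_div_n.
  have := expf_neq0 d nx; move=> h1; field; by rewrite ?expf_eq0 ?(negbTE nx) ?andbF ?eQ ?eQ' ?nx ?nal'.
have [GD eD] : exists G, ev iota x (Q * star al d Q) = x ^+ d * ev iota (x + x') G.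
  apply: palin => //.
  rewrite !evM sst sst2 /x' mul2n -addnn !exprD !expr_div_n.
  have := expf_neq0 d nx; move=> h1; field; by rewrite ?expf_eq0 ?(negbTE nx) ?andbF ?eQ ?eQ' ?nx ?nal'.
exists GN, GD.
have -> : ratv iota x P Q = ev iota x (P * star al d Q) / ev iota x (Q * star al d Q).
  rewrite !evM sst2 /ratv; have := expf_neq0 d nx; move=> h1; field; by rewrite ?expf_eq0 ?(negbTE nx) ?andbF ?eQ ?eQ' ?nx ?nal'.
rewrite eN eD /ratv invfM mulrACA divff ?mul1r //.
by rewrite expf_neq0.
Qed.

Lemma tau_ratv (K L : fieldType) (iota : {rmorphism K -> L}) (t : {rmorphism L -> L}) x P Q :
  fixesK iota t -> t (ratv iota x P Q) = ratv iota (t x) P Q.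
Proof. by move=> ht; rewrite /ratv fmorph_div !ev_morph. Qed.

Lemma RF_conj (K L : fieldType) (iota : {rmorphism K -> L}) (al : K) x P Q :
  x != 0 -> RF iota x (ratv iota (iota al / x) P Q).
Proof.
move=> nx; set d := (size P + size Q)%N.
exists (star al d P), (star al d Q).
rewrite /ratv !ev_star //; try (rewrite /d; lia).
by rewrite invfM mulrACA divff ?mul1r // expf_neq0.
Qed.

Lemma fix_lemma (K L : fieldType) (iota : {rmorphism K -> L}) (h : {poly K}) (al : K) x y
  (t : {rmorphism L -> L}) lam e :
  is_func_field iota h x y predT -> h != 0 -> ~~ odd (size h) ->
  al != 0 -> (2%:R : K) != 0 ->
  fixesK iota t -> t x = iota al / x -> t y = y * lam -> RF iota x lam ->
  RF iota x e -> e != 0 -> t (y * e) = y * e ->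
  forall z, t z = z -> in_gen iota (x + iota al / x) (y * e) z.
Proof.
case=> tx hy _ _ hgen nh eh nal n2 ht htx hty rlam re ne hv z hz.
have nx := transc_ne0x tx.
have ny : y != 0.
  apply/eqP => y0; move: hy; rewrite y0 expr0n /= => /esym /eqP.
  by rewrite (negbTE (transc_ne0 tx nh)).
have [P1 [P2 [Q1 [Q2 ez]]]] := hgen z isT.
have [P1' [P2' [nP2 eP]]] := ratv_norm iota P1 P2.
have [Q1' [Q2' [nQ2 eQ]]] := ratv_norm iota Q1 Q2.
rewrite -/(ratv iota x P1 P2) -/(ratv iota x Q1 Q2) eP eQ in ez.
set x' := iota al / x in htx.
have tz : t z = ratv iota x' P1' P2' + (ratv iota x' Q1' Q2' * lam) * y.
  by rewrite ez rmorphD (tau_ratv _ _ _ ht) rmorphM (tau_ratv _ _ _ ht) htx hty; congr (_ + _); ring.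
have [eA eB] : ratv iota x' P1' P2' = ratv iota x P1' P2' /\
               ratv iota x' Q1' Q2' * lam = ratv iota x Q1' Q2'.
  apply: (uniq_rep tx hy nh eh) => //.
  - exact: RF_conj.
  - apply: RF_mul => //; exact: RF_conj.
  - by do 2 eexists.
  - by do 2 eexists.
  - by rewrite -tz hz.
have [G1 [G2 eG]] := sym_rat nal n2 tx nP2 eA.
have [E1 [E2 eE]] := re.
have nE1 : E1 != 0.
  by apply: contraNneq ne => E10; rewrite eE /ratv E10 ev0 mul0r.
have nE2 : E2 != 0.
  by apply: contraNneq ne => E20; rewrite eE /ratv E20 ev0 invr0 mulr0.
have te : t e * lam = e.
  apply: (mulfI ny); move: hv; rewrite rmorphM hty; move=> <-; ring.
have nl : lam != 0 by apply: contraNneq ne => l0; rewrite -te l0 mulr0.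
have nte : t e != 0 by apply: contraNneq ne => l0; rewrite -te l0 mul0r.
have teE : t e = ratv iota x' E1 E2 by rewrite eE (tau_ratv _ _ _ ht) htx.
have eC : ratv iota x' (Q1' * E2) (Q2' * E1) = ratv iota x (Q1' * E2) (Q2' * E1).
  rewrite -!ratv_mul -!(ratv_inv iota _ E1 E2) -teE -eE.
  have key : forall b' b te' ee l : L, b' * l = b -> te' * l = ee -> l != 0 -> te' != 0 ->
      b' / te' = b / ee.
    by move=> b' b te' ee l <- <- nl' nt'; field; rewrite nl' nt'.
  exact: key eB te nl nte.
have [H1 [H2 eH]] := sym_rat nal n2 tx (mulf_neq0 nQ2 nE1) eC.
exists G1, G2, H1, H2.
rewrite -/(ratv iota (x + x') G1 G2) -/(ratv iota (x + x') H1 H2) -eG -eH ez.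
rewrite -ratv_mul -(ratv_inv iota _ E1 E2) -eE.
have key2 : forall A b yy ee : L, ee != 0 -> A + b * yy = A + b * ee^-1 * (yy * ee).
  by move=> A b yy ee nee; field.
exact: key2.
Qed.

Lemma quot_ok (K L : fieldType) (iota : {rmorphism K -> L}) (h h2 : {poly K}) (al : K) x y
  (t : {rmorphism L -> L}) lam e :
  is_func_field iota h x y predT -> h != 0 -> ~~ odd (size h) ->
  al != 0 -> (2%:R : K) != 0 ->
  fixesK iota t -> t x = iota al / x -> t y = y * lam -> RF iota x lam ->
  RF iota x e -> e != 0 -> t (y * e) = y * e ->
  (y * e) ^+ 2 = ev iota (x + iota al / x) h2 ->
  is_func_field iota h2 (x + iota al / x) (y * e) (fun z => t z == z).
Proof.
move=> hf nh eh nal n2 ht htx hty rl re ne hv hv2.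
have tx : transc iota x by case: hf.
have nx := transc_ne0x tx.
have nal' : iota al != 0 by rewrite fmorph_eq0.
split => //.
- exact: transc_u.
- apply/eqP; rewrite rmorphD fmorph_div htx ht; field; by rewrite nx nal'.
- by apply/eqP.
- move=> z /eqP hz; exact: (fix_lemma hf nh eh nal n2 ht htx hty rl re ne hv).
Qed.

Lemma invol (K L : fieldType) (iota : {rmorphism K -> L}) (h : {poly K}) (al : K) x y
  (t : {rmorphism L -> L}) lam :
  is_func_field iota h x y predT -> al != 0 ->
  fixesK iota t -> t x = iota al / x -> t y = y * lam -> lam * t lam = 1 ->
  forall z, t (t z) = z.
Proof.
case=> tx hy _ _ hgen nal ht htx hty hl z.
have nx := transc_ne0x tx.
have nal' : iota al != 0 by rewrite fmorph_eq0.
have [P1 [P2 [Q1 [Q2 ez]]]] := hgen z isT.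
rewrite -/(ratv iota x P1 P2) -/(ratv iota x Q1 Q2) in ez.
have ttx : t (t x) = x.
  by rewrite htx fmorph_div ht htx invf_div mulrC divfK.
rewrite ez rmorphD (tau_ratv _ _ _ ht) rmorphM (tau_ratv _ _ _ ht).
rewrite rmorphD (tau_ratv _ _ _ ht) rmorphM (tau_ratv _ _ _ ht) ttx.
have -> : t (t y) = y by rewrite hty rmorphM hty -mulrA hl mulr1.
by [].
Qed.

Lemma ev_hyp (K L : fieldType) (iota : {rmorphism K -> L}) g (a al : K) z :
  ev iota z (hyp_poly g a al) = z ^+ (2 * g + 1) + iota a * z ^+ (g + 1) + iota al ^+ g * z.
Proof. by rewrite /hyp_poly !evD !evZ !evXn evX rmorphXn. Qed.

Lemma hyp_conj (K L : fieldType) (iota : {rmorphism K -> L}) g (a al c : K) x y :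
  x != 0 -> al != 0 -> c ^+ 2 = al ^+ g.+1 ->
  y ^+ 2 = ev iota x (hyp_poly g a al) ->
  (y * iota c / x ^+ g.+1) ^+ 2 = ev iota (iota al / x) (hyp_poly g a al).
Proof.
move=> nx nal hc hy.
have nal' : iota al != 0 by rewrite fmorph_eq0.
rewrite !ev_hyp in hy *.
have ic : iota c ^+ 2 = iota al ^+ g.+1 by rewrite -!rmorphXn hc.
rewrite expr_div_n exprMn hy ic !expr_div_n.
rewrite !addn1 mul2n -addnn !exprS !exprD.
have := expf_neq0 g nx; have := expf_neq0 g nal'.
move=> h1 h2; field; by rewrite ?expf_eq0 ?(negbTE nx) ?(negbTE nal') ?andbF ?h1 ?h2 ?nx ?nal'.
Qed.

Lemma ev_dick (K L : fieldType) (iota : {rmorphism K -> L}) (al : K) x m :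
  x != 0 -> (0 < m)%N ->
  ev iota (x + iota al / x) (dickson m al) = x ^+ m + (iota al / x) ^+ m.
Proof.
move=> nx; case: m => // m _.
by rewrite -ev_Dk.
Qed.

Lemma odd_id1 (L : fieldType) (x y A a' : L) j :
  x != 0 ->
  y ^+ 2 = x ^+ (2 * (j + j).+1 + 1) + a' * x ^+ ((j + j).+1 + 1) + A ^+ (j + j).+1 * x ->
  (y * (x ^+ j.+1)^-1) ^+ 2 = x ^+ (j + j).+1 + (A / x) ^+ (j + j).+1 + a'.
Proof.
move=> nx hy; rewrite exprMn hy.
have -> : (2 * (j + j).+1 + 1 = (j + j + j + j).+3)%N by lia.
have -> : ((j + j).+1 + 1 = (j + j).+2)%N by lia.
rewrite !expr_div_n !exprS !exprD.
have := expf_neq0 j nx => h1; field; by rewrite h1 nx.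
Qed.

Lemma odd_id2 (L : fieldType) (x y A a' : L) j :
  x != 0 ->
  y ^+ 2 = x ^+ (2 * (j + j).+1 + 1) + a' * x ^+ ((j + j).+1 + 1) + A ^+ (j + j).+1 * x ->
  (y * ((x - A / x) / x ^+ j.+1)) ^+ 2 =
  ((x + A / x) ^+ 2 - 4%:R * A) * (x ^+ (j + j).+1 + (A / x) ^+ (j + j).+1 + a').
Proof.
move=> nx hy; rewrite exprMn hy.
have -> : (2 * (j + j).+1 + 1 = (j + j + j + j).+3)%N by lia.
have -> : ((j + j).+1 + 1 = (j + j).+2)%N by lia.
rewrite !expr_div_n !exprS !exprD.
have := expf_neq0 j nx => h1; field; by rewrite h1 nx.
Qed.

Lemma odd_id3 (L : fieldType) (x y A : L) j :
  x != 0 -> A != 0 ->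
  y * (A ^+ j.+1 / x ^+ (j + j).+2) * ((A / x) ^+ j.+1)^-1 = y * (x ^+ j.+1)^-1.
Proof.
move=> nx nA; rewrite !expr_div_n !exprS !exprD.
have := expf_neq0 j nx; have := expf_neq0 j nA => h1 h2; field; by rewrite h1 h2 nx nA.
Qed.

Lemma odd_id4 (L : fieldType) (x y A : L) j :
  x != 0 -> A != 0 ->
  y * - (A ^+ j.+1 / x ^+ (j + j).+2) * ((A / x - A / (A / x)) / (A / x) ^+ j.+1) =
  y * ((x - A / x) / x ^+ j.+1).
Proof.
move=> nx nA; rewrite !expr_div_n !exprS !exprD.
have := expf_neq0 j nx; have := expf_neq0 j nA => h1 h2; field; by rewrite h1 h2 nx nA.
Qed.

Lemma even_id1 (L : fieldType) (x y B a' : L) m :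
  x != 0 ->
  y ^+ 2 = x ^+ (2 * (m + m) + 1) + a' * x ^+ ((m + m) + 1) + (B ^+ 2) ^+ (m + m) * x ->
  (y * ((x + B) / x ^+ m.+1)) ^+ 2 =
  (x + B ^+ 2 / x + 2%:R * B) * (x ^+ (m + m) + (B ^+ 2 / x) ^+ (m + m) + a').
Proof.
move=> nx hy; rewrite exprMn hy.
have -> : (2 * (m + m) + 1 = (m + m + m + m).+1)%N by lia.
rewrite !expr_div_n -![(B ^+ 2) ^+ (m + m)]exprM.
have -> : (2 * (m + m) = m + m + m + m)%N by lia.
rewrite !exprS !exprD.
have := expf_neq0 m nx => h1; field; by rewrite h1 nx.
Qed.

Lemma even_id2 (L : fieldType) (x y B a' : L) m :
  x != 0 ->
  y ^+ 2 = x ^+ (2 * (m + m) + 1) + a' * x ^+ ((m + m) + 1) + (B ^+ 2) ^+ (m + m) * x ->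
  (y * ((x - B) / x ^+ m.+1)) ^+ 2 =
  (x + B ^+ 2 / x - 2%:R * B) * (x ^+ (m + m) + (B ^+ 2 / x) ^+ (m + m) + a').
Proof.
move=> nx hy; rewrite exprMn hy.
have -> : (2 * (m + m) + 1 = (m + m + m + m).+1)%N by lia.
rewrite !expr_div_n -![(B ^+ 2) ^+ (m + m)]exprM.
have -> : (2 * (m + m) = m + m + m + m)%N by lia.
rewrite !exprS !exprD.
have := expf_neq0 m nx => h1; field; by rewrite h1 nx.
Qed.

Lemma even_id3 (L : fieldType) (x y B : L) m :
  x != 0 -> B != 0 ->
  y * (B ^+ (m + m).+1 / x ^+ (m + m).+1) * ((B ^+ 2 / x + B) / (B ^+ 2 / x) ^+ m.+1) =
  y * ((x + B) / x ^+ m.+1).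
Proof.
move=> nx nB; rewrite !expr_div_n -![(B ^+ 2) ^+ m.+1]exprM.
rewrite (_ : (2 * m.+1 = m + m + 2)%N); last by lia.
rewrite !exprS !exprD.
have := expf_neq0 m nx; have := expf_neq0 m nB => h1 h2; field; by rewrite h1 h2 nx nB.
Qed.

Lemma even_id4 (L : fieldType) (x y B : L) m :
  x != 0 -> B != 0 ->
  y * - (B ^+ (m + m).+1 / x ^+ (m + m).+1) * ((B ^+ 2 / x - B) / (B ^+ 2 / x) ^+ m.+1) =
  y * ((x - B) / x ^+ m.+1).
Proof.
move=> nx nB; rewrite !expr_div_n -![(B ^+ 2) ^+ m.+1]exprM.
rewrite (_ : (2 * m.+1 = m + m + 2)%N); last by lia.
rewrite !exprS !exprD.
have := expf_neq0 m nx; have := expf_neq0 m nB => h1 h2; field; by rewrite h1 h2 nx nB.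
Qed.

Lemma x_ne_conj (K L : fieldType) (iota : {rmorphism K -> L}) (al : K) x :
  transc iota x -> iota al / x != x.
Proof.
move=> tx; have nx := transc_ne0x tx; apply/eqP => e.
have nP : ('X^2 - al%:P : {poly K}) != 0 by apply: monic_neq0; apply: monicXnsubC.
have ex2 : x ^+ 2 = iota al by rewrite expr2 -{2}e mulrC divfK.
by have := transc_ne0 tx nP; rewrite evB evXn evC ex2 subrr eqxx.
Qed.

Lemma x_add_ne0 (K L : fieldType) (iota : {rmorphism K -> L}) (b : K) x :
  transc iota x -> x + iota b != 0.
Proof.
move=> tx; have nP : ('X + b%:P : {poly K}) != 0 by apply: monic_neq0; apply: monicXaddC.
by have := transc_ne0 tx nP; rewrite evD evX evC.
Qed.

Lemma x_sub_ne0 (K L : fieldType) (iota : {rmorphism K -> L}) (b : K) x :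
  transc iota x -> x - iota b != 0.
Proof.
move=> tx; have nP : ('X - b%:P : {poly K}) != 0 by apply: monic_neq0; apply: monicXsubC.
by have := transc_ne0 tx nP; rewrite evB evX evC.
Qed.

Unset Implicit Arguments.

Theorem theorem2 (K : finFieldType) (p n g : nat) (a al : K)
  (hp : prime p) (hp2 : (2 < p)%N) (hchar : p \in [pchar K])
  (hq : #|K| = (p ^ n)%N) (hg : (2 <= g)%N) (hgp : coprime g p)
  (hal : al != 0) (hsep : separable_poly (hyp_poly g a al)) :
  (* g odd: over F_q, with beta^(g+1) = alpha^((g+1)/2) *)
  (odd g ->
   forall (L : fieldType) (iota : {rmorphism K -> L}) (x y : L),
   is_func_field iota (hyp_poly g a al) x y predT ->
   (exists s : {rmorphism L -> L}, fixesK iota s /\ s x = iota al / x /\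
        s y = y * iota (al ^+ (g.+1)./2) / x ^+ g.+1) /\
   (forall s w : {rmorphism L -> L},
      fixesK iota s -> s x = iota al / x -> s y = y * iota (al ^+ (g.+1)./2) / x ^+ g.+1 ->
      fixesK iota w -> w x = x -> w y = - y ->
      [/\ (forall z, s (s z) = z), (exists z, s z != w z),
          (exists u v, is_func_field iota (dickson g al + a%:P) u v
                                     (fun z => s z == z)) &
          (exists u v, is_func_field iota (('X^2 - (4 * al)%:P) * (dickson g al + a%:P)) u v
                                     (fun z => w (s z) == z))]))
  /\
  (* g even: over F_q(beta) -- here K is any finite field containing beta *)
  (~~ odd g -> forall beta : K, beta ^+ 2 = al ->
   forall (L : fieldType) (iota : {rmorphism K -> L}) (x y : L),
   is_func_field iota (hyp_poly g a al) x y predT ->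
   (exists s : {rmorphism L -> L}, fixesK iota s /\ s x = iota al / x /\
        s y = y * iota (beta ^+ g.+1) / x ^+ g.+1) /\
   (forall s w : {rmorphism L -> L},
      fixesK iota s -> s x = iota al / x -> s y = y * iota (beta ^+ g.+1) / x ^+ g.+1 ->
      fixesK iota w -> w x = x -> w y = - y ->
      [/\ (forall z, s (s z) = z), (exists z, s z != w z),
          (exists u v, is_func_field iota (('X + (2 * beta)%:P) * (dickson g al + a%:P)) u v
                                     (fun z => s z == z)) &
          (exists u v, is_func_field iota (('X - (2 * beta)%:P) * (dickson g al + a%:P)) u v
                                     (fun z => w (s z) == z))])).
Proof.
have g1 : (1 <= g)%N by lia.
have sh : size (hyp_poly g a al) = (2 * g + 2)%N := size_hyp a al g1.
have nh : hyp_poly g a al != 0 by rewrite -size_poly_gt0 sh addn2.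
have eh : ~~ odd (size (hyp_poly g a al)).
  by rewrite sh (_ : (2 * g + 2 = (g.+1).*2)%N) ?odd_double //; lia.
have n2 : (2%:R : K) != 0.
  rewrite -(dvdn_pcharf hchar); apply/negP => /(dvdn_leq (isT : (0 < 2)%N)); lia.
split.
- move=> og L iota x y hf.
  have tx : transc iota x by case: hf.
  have hy : y ^+ 2 = ev iota x (hyp_poly g a al) by case: hf.
  have nx := transc_ne0x tx.
  have nal' : iota al != 0 by rewrite fmorph_eq0.
  have [j ej] : exists j, g = (j + j).+1.
    by exists g./2; rewrite -{1}(odd_double_half g) og -addnn add1n.
  have ek : (g.+1)./2 = j.+1.
    by rewrite ej (_ : (j + j).+2 = (j.+1).*2)%N ?doubleK //; lia.
  rewrite ek.
  set c := al ^+ j.+1.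
  have hc : c ^+ 2 = al ^+ g.+1 by rewrite /c -exprM ej; congr (_ ^+ _); lia.
  split.
    apply: (ext_exists hf nh eh (transc_inv hal tx)).
    exact: hyp_conj.
  move=> s w hs hsx hsy hw hwx hwy.
  set lam := iota c / x ^+ g.+1.
  have hsy' : s y = y * lam by rewrite hsy /lam mulrA.
  have ic : iota c ^+ 2 = iota al ^+ g.+1 by rewrite -!rmorphXn hc.
  have hl : lam * s lam = 1.
    rewrite /lam fmorph_div hs rmorphXn hsx expr_div_n.
    have := expf_neq0 g.+1 nx; have := expf_neq0 g.+1 nal' => h1 h2.
    have -> : iota c / x ^+ g.+1 * (iota c / (iota al ^+ g.+1 / x ^+ g.+1)) =
              iota c ^+ 2 / iota al ^+ g.+1.
      by field; rewrite h1 h2.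
    by rewrite ic divff.
  have rl : RF iota x lam by exists c%:P, 'X^(g.+1); rewrite /ratv evC evXn.
  have fws : fixesK iota (w \o s : {rmorphism L -> L}) by move=> k /=; rewrite hs hw.
  have hwsx : (w \o s : {rmorphism L -> L}) x = iota al / x by rewrite /= hsx fmorph_div hw hwx.
  have hwlam : w lam = lam by rewrite /lam fmorph_div hw rmorphXn hwx.
  have hwsy : (w \o s : {rmorphism L -> L}) y = y * - lam by rewrite /= hsy' rmorphM hwy hwlam mulNr mulrN.
  have hy' := hy; rewrite ev_hyp ej in hy'.
  split.
  - exact: (invol hf hal hs hsx hsy' hl).
  - by exists x; rewrite hsx hwx; exact: x_ne_conj.
  - exists (x + iota al / x), (y * (x ^+ j.+1)^-1).
    apply: (quot_ok hf nh eh hal n2 hs hsx hsy' rl).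
    + by exists 1, 'X^(j.+1); rewrite /ratv ev1 evXn mul1r.
    + by rewrite invr_eq0 expf_neq0.
    + rewrite rmorphM hsy' fmorphV rmorphXn hsx /lam /c rmorphXn ej.
      exact: odd_id3.
    + rewrite evD ev_dick // evC ej; exact: odd_id1.
  - exists (x + iota al / x), (y * ((x - iota al / x) / x ^+ j.+1)).
    apply: (quot_ok hf nh eh hal n2 fws hwsx hwsy (RF_opp rl)).
    + exists ('X^2 - al%:P), 'X^(j.+2); rewrite /ratv evB !evXn evC.
      rewrite (exprS x j.+1) expr2; have := expf_neq0 j.+1 nx => h1; field; by rewrite h1 nx.
    + by rewrite mulf_neq0 ?invr_eq0 ?expf_neq0 // subr_eq0 eq_sym x_ne_conj.
    + rewrite rmorphM hwsy fmorph_div rmorphB fmorph_div fws hwsx rmorphXn hwsx.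
      rewrite /lam /c rmorphXn ej; exact: odd_id4.
    + rewrite evM evB evXn evC evD ev_dick // evC rmorphM rmorph_nat ej.
      exact: odd_id2.
move=> eg beta hb L iota x y hf.
have tx : transc iota x by case: hf.
have hy : y ^+ 2 = ev iota x (hyp_poly g a al) by case: hf.
have nx := transc_ne0x tx.
have nal' : iota al != 0 by rewrite fmorph_eq0.
have nb : beta != 0 by apply: contraNneq hal => b0; rewrite -hb b0 expr0n.
set B := iota beta.
have nB : B != 0 by rewrite fmorph_eq0.
have eA : iota al = B ^+ 2 by rewrite -hb rmorphXn.
have [m em] : exists m, g = (m + m)%N.
  by exists g./2; rewrite -{1}(odd_double_half g) (negbTE eg) -addnn add0n.
set c := beta ^+ g.+1.
have hc : c ^+ 2 = al ^+ g.+1 by rewrite /c -hb -!exprM mulnC.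
split.
  apply: (ext_exists hf nh eh (transc_inv hal tx)).
  exact: hyp_conj.
move=> s w hs hsx hsy hw hwx hwy.
set lam := iota c / x ^+ g.+1.
have hsy' : s y = y * lam by rewrite hsy /lam mulrA.
have ic : iota c ^+ 2 = iota al ^+ g.+1 by rewrite -!rmorphXn hc.
have hl : lam * s lam = 1.
  rewrite /lam fmorph_div hs rmorphXn hsx expr_div_n.
  have := expf_neq0 g.+1 nx; have := expf_neq0 g.+1 nal' => h1 h2.
  have -> : iota c / x ^+ g.+1 * (iota c / (iota al ^+ g.+1 / x ^+ g.+1)) =
            iota c ^+ 2 / iota al ^+ g.+1.
    by field; rewrite h1 h2.
  by rewrite ic divff.
have rl : RF iota x lam by exists c%:P, 'X^(g.+1); rewrite /ratv evC evXn.
have fws : fixesK iota (w \o s : {rmorphism L -> L}) by move=> k /=; rewrite hs hw.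
have hwsx : (w \o s : {rmorphism L -> L}) x = iota al / x by rewrite /= hsx fmorph_div hw hwx.
have hwlam : w lam = lam by rewrite /lam fmorph_div hw rmorphXn hwx.
have hwsy : (w \o s : {rmorphism L -> L}) y = y * - lam by rewrite /= hsy' rmorphM hwy hwlam mulNr mulrN.
have hy' := hy; rewrite ev_hyp eA em in hy'.
split.
- exact: (invol hf hal hs hsx hsy' hl).
- by exists x; rewrite hsx hwx; exact: x_ne_conj.
- exists (x + iota al / x), (y * ((x + B) / x ^+ m.+1)).
  apply: (quot_ok hf nh eh hal n2 hs hsx hsy' rl).
  + by exists ('X + beta%:P), 'X^(m.+1); rewrite /ratv evD evX evC evXn.
  + by rewrite mulf_neq0 ?invr_eq0 ?expf_neq0 // x_add_ne0.
  + rewrite rmorphM hsy' fmorph_div rmorphD hsx hs rmorphXn hsx.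
    rewrite /lam /c rmorphXn eA em; exact: even_id3.
  + rewrite evM !evD evX !evC ev_dick ?em //; last by lia.
    rewrite rmorphM rmorph_nat eA; exact: even_id1.
- exists (x + iota al / x), (y * ((x - B) / x ^+ m.+1)).
  apply: (quot_ok hf nh eh hal n2 fws hwsx hwsy (RF_opp rl)).
  + by exists ('X - beta%:P), 'X^(m.+1); rewrite /ratv evB evX evC evXn.
  + by rewrite mulf_neq0 ?invr_eq0 ?expf_neq0 // x_sub_ne0.
  + rewrite rmorphM hwsy fmorph_div rmorphB hwsx fws rmorphXn hwsx.
    rewrite /lam /c rmorphXn eA em; exact: even_id4.
  + rewrite evM evB !evD evX !evC ev_dick ?em //; last by lia.
    rewrite rmorphM rmorph_nat eA; exact: even_id2.
Qed.
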